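(* Let $d\ge3$, let $I\subset\mathbb{R}$ be an open interval and $V\subset\mathbb{R}^{d-1}$ an open connected set, and let $\psi\in C^\infty(I\times V)$ satisfy $\mathrm{rank}\,\nabla^2_y\partial_t\psi(t;y)=d-1$ for all $(t,y)\in I\times V$. If $c\in C^\infty(I\times V)$ satisfies $\partial_t^2\nabla_y^2\psi(t;y)=c(t;y)\,\partial_t\nabla^2_y\psi(t;y)$ on $I\times V$, then $c(t;y)$ does not depend on $y$, i.e. $c(t;y)=c(t)$ for some function $c$ on $I$.
   Context: $\nabla^2_y$ denotes the Hessian in the variables $y\in\mathbb{R}^{d-1}$. *)

(* Defs.v *)
From HB Require Import structures.
From mathcomp Require Import all_boot all_order all_algebra.
From mathcomp Require Import all_classical all_reals all_analysis.
Set Implicit Arguments. Unset Strict Implicit. Unset Printing Implicit Defensive.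
Import Order.TTheory GRing.Theory Num.Theory.
Import numFieldNormedType.Exports.
Local Open Scope classical_set_scope.
Local Open Scope ring_scope.

Section PartialDerivatives.
Variables (R : realType) (n : nat).

Definition fun2 := R -> 'rV[R]_n -> R.

Definition pdt (f : fun2) : fun2 := fun t y => derive (fun s : R => f s y) t 1.

Definition pdy (i : 'I_n) (f : fun2) : fun2 :=
  fun t y => derive (fun z : 'rV[R]_n => f t z) y (delta_mx 0 i).

Inductive pop := PDt | PDy of 'I_n.

Definition apply_pop (o : pop) (f : fun2) : fun2 :=
  match o with PDt => pdt f | PDy i => pdy i f end.

(* iterated partial derivative (rightmost operator applied first) *)
Fixpoint iter_pd (ops : seq pop) (f : fun2) : fun2 :=
  match ops with [::] => f | o :: ops' => apply_pop o (iter_pd ops' f) end.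

Definition smooth_on (I : set R) (V : set 'rV[R]_n) (f : fun2) : Prop :=
  forall (ops : seq pop) (t : R) (y : 'rV[R]_n), I t -> V y ->
    let g := iter_pd ops f in
    [/\ {for (t, y), continuous (fun p : R * 'rV[R]_n => g p.1 p.2)},
        derivable (fun s : R => g s y) t 1 &
        forall i : 'I_n, derivable (fun z : 'rV[R]_n => g t z) y (delta_mx 0 i)].

Definition hess_y (f : fun2) (t : R) (y : 'rV[R]_n) : 'M[R]_n :=
  \matrix_(i, j) pdy i (pdy j f) t y.

Definition dtk_hess_y (k : nat) (f : fun2) (t : R) (y : 'rV[R]_n) : 'M[R]_n :=
  \matrix_(i, j) iter k pdt (pdy i (pdy j f)) t y.

End PartialDerivatives.

(* Main.v *)
Require Import Defs.
From HB Require Import structures.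
From mathcomp Require Import all_boot all_order all_algebra.
From mathcomp Require Import all_classical all_reals all_analysis.
From mathcomp Require Import ring lra.
Import Order.TTheory GRing.Theory Num.Theory.
Import numFieldNormedType.Exports.
Local Open Scope classical_set_scope.
Local Open Scope ring_scope.

Section S.
Variable R : realType.

Lemma line_eq (V : normedModType R) (f : V -> R) (a v : V) (r0 : R) :
  (fun h : R => h^-1 *: (((fun r : R => f (a + r *: v)) \o shift r0) (h *: 1) - f (a + r0 *: v)))
  = (fun h : R => h^-1 *: ((f \o shift (a + r0 *: v)) (h *: v) - f (a + r0 *: v))).
Proof.
apply/funext => h /=. congr (_ *: (f _ - _)).
rewrite scalerDl. have -> : h%:A = h :> R by rewrite /GRing.scale/= mulr1. by rewrite addrCA addrA.
Qed.

Lemma mvt1 (f : R -> R) (a h : R) : 0 < h ->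
  (forall s, a <= s <= a + h -> derivable f s 1) ->
  exists2 c, a <= c <= a + h & f (a + h) - f a = derive f c 1 * h.
Proof.
move=> h0 df.
have := @MVT_segment R f (fun x => derive f x 1) a (a + h).
rewrite addrAC subrr add0r; apply.
- by rewrite lerDl ltW.
- move=> x; rewrite in_itv /= => /andP[ax xb]; apply: derivableP; apply: df.
  by rewrite !ltW.
- apply: derivable_within_continuous => x; rewrite in_itv /= => /andP[ax xb].
  by apply: df; rewrite ax xb.
Qed.

Lemma mvt2 (g : R -> R -> R) (a b h : R) : 0 < h ->
  (forall s r, a <= s <= a + h -> b <= r <= b + h ->
     derivable (g ^~ r) s 1 /\ derivable (fun r' => derive (g ^~ r') s 1) r 1) ->
  exists s, exists r, [/\ a <= s <= a + h, b <= r <= b + h &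
    g (a + h) (b + h) - g (a + h) b - g a (b + h) + g a b =
    h * h * derive (fun r' => derive (g ^~ r') s 1) r 1].
Proof.
move=> h0 H.
pose phi s := g s (b + h) - g s b.
have bb : b <= b <= b + h by rewrite lexx lerDl ltW.
have bh : b <= b + h <= b + h by rewrite lexx lerDl ltW.
have [s sI es] : exists2 s, a <= s <= a + h & phi (a + h) - phi a = derive phi s 1 * h.
  apply: mvt1 => // s sI; apply: derivableB; [exact: (H _ _ sI bh).1|exact: (H _ _ sI bb).1].
have [r rI er] : exists2 r, b <= r <= b + h &
   derive (g ^~ (b + h)) s 1 - derive (g ^~ b) s 1 = derive (fun r' => derive (g ^~ r') s 1) r 1 * h.
  by apply: (@mvt1 (fun r' => derive (g ^~ r') s 1)) => // r rI; exact: (H _ _ sI rI).2.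
exists s, r; split => //.
have E : derive phi s 1 = derive (g ^~ (b + h)) s 1 - derive (g ^~ b) s 1.
  by rewrite /phi deriveB //; [exact: (H _ _ sI bh).1|exact: (H _ _ sI bb).1].
move: es; rewrite E er /phi => es. lra.
Qed.

Lemma near_box (P : R * R -> Prop) (a b : R) :
  (\forall p \near (a, b), P p) -> exists2 d, 0 < d &
    forall s r, `|s - a| < d -> `|r - b| < d -> P (s, r).
Proof.
move=> /nbhs_ballP [d d0 Hd]; exists d => // s r sa rb; apply: Hd.
split => /=; rewrite /ball /= distrC //.
Qed.

Lemma key (x y z q : R) : `|x - z| < q -> `|y - z| < q -> `|x - y| < q + q.
Proof.
move=> h1 h2; have -> : x - y = (x - z) - (y - z) by ring.
exact: le_lt_trans (ler_normB _ _) (ltrD h1 h2).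
Qed.

Lemma key2 (N : R) : 0 < N / 4 -> N < N / 4 + N / 4 -> False.
Proof. move=> h1 h2; lra. Qed.

Lemma schwarz (g : R -> R -> R) (a b e : R) : 0 < e ->
 (forall s r, `|s - a| < e -> `|r - b| < e ->
   [/\ derivable (g ^~ r) s 1, derivable (g s) r 1,
       derivable (fun r' => derive (g ^~ r') s 1) r 1 &
       derivable (fun s' => derive (g s') r 1) s 1]) ->
 {for (a,b), continuous (fun p : R * R => derive (fun r' => derive (g ^~ r') p.1 1) p.2 1)} ->
 {for (a,b), continuous (fun p : R * R => derive (fun s' => derive (g s') p.2 1) p.1 1)} ->
 derive (fun r' => derive (g ^~ r') a 1) b 1 = derive (fun s' => derive (g s') b 1) a 1.
Proof.
move=> e0 H C1 C2.
set D1 := derive (fun r' => derive (g ^~ r') a 1) b 1.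
set D2 := derive (fun s' => derive (g s') b 1) a 1.
have [//|neq] := eqVneq D1 D2.
have ep : 0 < `|D1 - D2| / 4 by rewrite divr_gt0 // normr_gt0 subr_eq0.
have [d1 d10 H1] := near_box _ _ _ ((cvgrPdist_lt _ _).1 C1 _ ep).
have [d2 d20 H2] := near_box _ _ _ ((cvgrPdist_lt _ _).1 C2 _ ep).
pose m := Num.min e (Num.min d1 d2).
have m0 : 0 < m by rewrite !lt_min e0 d10 d20.
pose h := m / 2.
have h0 : 0 < h by rewrite divr_gt0.
have hm : h < m by rewrite /h ltr_pdivrMr // ltr_pMr // ltr1n.
have hlt x y : x <= y <= x + h -> `|y - x| < m.
  move=> /andP[xy yx]; rewrite ger0_norm ?subr_ge0 //.
  by apply: le_lt_trans hm; rewrite lerBlDl.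
have me : m <= e by rewrite ge_min lexx.
have md1 : m <= d1 by rewrite !ge_min lexx orbT.
have md2 : m <= d2 by rewrite !ge_min lexx !orbT.
have [s [r [sI rI E1]]] : exists s, exists r, [/\ a <= s <= a + h, b <= r <= b + h &
    g (a + h) (b + h) - g (a + h) b - g a (b + h) + g a b =
    h * h * derive (fun r' => derive (g ^~ r') s 1) r 1].
  apply: (@mvt2 g a b h h0) => s r sI rI.
  have := H s r (lt_le_trans (hlt _ _ sI) me) (lt_le_trans (hlt _ _ rI) me).
  by case.
have [r' [s' [rI' sI' E2]]] : exists r', exists s', [/\ b <= r' <= b + h, a <= s' <= a + h &
    (fun r s => g s r) (b + h) (a + h) - (fun r s => g s r) (b + h) a
      - (fun r s => g s r) b (a + h) + (fun r s => g s r) b a =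
    h * h * derive (fun s'' => derive ((fun r s => g s r) ^~ s'') r' 1) s' 1].
  apply: (@mvt2 (fun r s => g s r) b a h h0) => r0 s0 rI0 sI0.
  have := H s0 r0 (lt_le_trans (hlt _ _ sI0) me) (lt_le_trans (hlt _ _ rI0) me).
  by case.
move: E2 => /= E2.
have Heq : derive (fun r' => derive (g ^~ r') s 1) r 1 = derive (fun s'' => derive (g s'') r' 1) s' 1.
  apply: (mulfI (_ : h * h != 0)); first by rewrite mulf_neq0 // gt_eqF.
  by rewrite -E1 -E2; congr (_ + _); rewrite addrAC.
set X := derive (fun r' => derive (g ^~ r') s 1) r 1.
have L1 : `|D1 - X| < `|D1 - D2| / 4.
  exact: (H1 s r (lt_le_trans (hlt _ _ sI) md1) (lt_le_trans (hlt _ _ rI) md1)).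
have L2 : `|D2 - X| < `|D1 - D2| / 4.
  rewrite /X Heq.
  exact: (H2 s' r' (lt_le_trans (hlt _ _ sI') md2) (lt_le_trans (hlt _ _ rI') md2)).
exfalso; exact: (key2 _ ep (key _ _ _ _ L1 L2)).
Qed.
End S.


Section S.
Variable R : realType.
Lemma contP (W : normedModType R) (p u w : W) :
  (fun sr : R * R => p + sr.1 *: u + sr.2 *: w) @ (0, 0) --> p.
Proof.
suff : (fun sr : R * R => p + sr.1 *: u + sr.2 *: w) @ (0, 0) --> p + (0:R) *: u + (0:R) *: w.
  by rewrite !scale0r !addr0.
apply: cvgD; last by apply: cvgZr_tmp; exact: cvg_snd.
apply: cvgD; first exact: cvg_cst.
by apply: cvgZr_tmp; exact: cvg_fst.
Qed.

Lemma derivable_line (W : normedModType R) (f : W -> R) (a v : W) (r0 : R) :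
  derivable (fun r : R => f (a + r *: v)) r0 1 = derivable f (a + r0 *: v) v.
Proof. by rewrite /derivable line_eq. Qed.

Lemma derive_line (W : normedModType R) (f : W -> R) (a v : W) (r0 : R) :
  derive (fun r : R => f (a + r *: v)) r0 1 = derive f (a + r0 *: v) v.
Proof. by rewrite /derive line_eq. Qed.


Lemma schwarzW (W : normedModType R) (f : W -> R) (p u w : W) :
 (\forall q \near p, [/\ derivable f q u, derivable f q w,
     derivable (fun q' => derive f q' u) q w & derivable (fun q' => derive f q' w) q u]) ->
 {for p, continuous (fun q => derive (fun q' => derive f q' u) q w)} ->
 {for p, continuous (fun q => derive (fun q' => derive f q' w) q u)} ->
 derive (fun q => derive f q u) p w = derive (fun q => derive f q w) p u.
Proof.
move=> Hn C1 C2.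
pose P (sr : R * R) := p + sr.1 *: u + sr.2 *: w.
pose g s r := f (p + s *: u + r *: w).
have E1 s r : p + r *: w + s *: u = P (s, r) by rewrite /P /= addrAC.
have gu s r : derive (g ^~ r) s 1 = derive f (P (s, r)) u.
  have -> : g ^~ r = fun s => f (p + r *: w + s *: u).
    by apply/funext => s'; rewrite /g addrAC.
  by rewrite derive_line E1.
have dgu s r : derivable (g ^~ r) s 1 = derivable f (P (s, r)) u.
  have -> : g ^~ r = fun s => f (p + r *: w + s *: u).
    by apply/funext => s'; rewrite /g addrAC.
  by rewrite derivable_line E1.
have gw s r : derive (g s) r 1 = derive f (P (s, r)) w by rewrite derive_line.
have dgw s r : derivable (g s) r 1 = derivable f (P (s, r)) w by rewrite derivable_line.
have guw s r : derive (fun r' => derive (g ^~ r') s 1) r 1 = derive (fun q => derive f q u) (P (s, r)) w.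
  have -> : (fun r' => derive (g ^~ r') s 1) = fun r' => derive f (P (s, r')) u.
    by apply/funext => r'; rewrite gu.
  exact: (@derive_line W (fun q => derive f q u) (p + s *: u) w r).
have dguw s r : derivable (fun r' => derive (g ^~ r') s 1) r 1 = derivable (fun q => derive f q u) (P (s, r)) w.
  have -> : (fun r' => derive (g ^~ r') s 1) = fun r' => derive f (P (s, r')) u.
    by apply/funext => r'; rewrite gu.
  exact: (@derivable_line W (fun q => derive f q u) (p + s *: u) w r).
have gwu s r : derive (fun s' => derive (g s') r 1) s 1 = derive (fun q => derive f q w) (P (s, r)) u.
  have -> : (fun s' => derive (g s') r 1) = fun s' => derive f (p + r *: w + s' *: u) w.
    by apply/funext => s'; rewrite gw E1.
  by rewrite (@derive_line W (fun q => derive f q w)) E1.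
have dgwu s r : derivable (fun s' => derive (g s') r 1) s 1 = derivable (fun q => derive f q w) (P (s, r)) u.
  have -> : (fun s' => derive (g s') r 1) = fun s' => derive f (p + r *: w + s' *: u) w.
    by apply/funext => s'; rewrite gw E1.
  by rewrite (@derivable_line W (fun q => derive f q w)) E1.
have P0 : P (0, 0) = p by rewrite /P /= !scale0r !addr0.
have Hn' := @contP W p u w _ Hn.
have Hn2 : \forall sr \near ((0:R), (0:R)), [/\ derivable f (P sr) u, derivable f (P sr) w,
     derivable (fun q' => derive f q' u) (P sr) w & derivable (fun q' => derive f q' w) (P sr) u].
  exact: Hn'.
have [e e0 He] := @near_box R _ _ _ Hn2.
have := @schwarz R g 0 0 e e0.
rewrite guw gwu P0; apply.
- move=> s r hs hr; rewrite dgu dgw dguw dgwu; exact: He.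
- have -> : (fun p0 : R * R => derive (fun r' => derive (g ^~ r') p0.1 1) p0.2 1) =
     (fun q => derive (fun q' => derive f q' u) q w) \o P.
    by apply/funext => -[s r]; rewrite /= guw.
  rewrite /prop_for /continuous_at (_ : ((_ \o P) (0, 0)) = derive (fun q' => derive f q' u) p w).
    exact: cvg_comp (@contP W p u w) C1.
  by rewrite /comp P0.
- have -> : (fun p0 : R * R => derive (fun s' => derive (g s') p0.2 1) p0.1 1) =
     (fun q => derive (fun q' => derive f q' w) q u) \o P.
    by apply/funext => -[s r]; rewrite /= gwu.
  rewrite /prop_for /continuous_at (_ : ((_ \o P) (0, 0)) = derive (fun q' => derive f q' w) p u).
    exact: cvg_comp (@contP W p u w) C2.
  by rewrite /comp P0.
Qed.

End S.


Section W.
Variables (R : realType) (n : nat).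
Definition tl (F : fun2 R n) : R * 'rV[R]_n -> R := fun q => F q.1 q.2.
Definition dir (o : pop n) : R * 'rV[R]_n :=
  match o with PDt => (1, 0) | PDy i => (0, delta_mx 0 i) end.

Lemma pop_fun o F t y :
  (fun h : R => h^-1 *: ((tl F \o shift (t, y)) (h *: dir o) - tl F (t, y))) =
  match o with
  | PDt => (fun h : R => h^-1 *: (((fun s => F s y) \o shift t) (h *: 1) - F t y))
  | PDy i => (fun h : R => h^-1 *: (((fun z => F t z) \o shift y) (h *: delta_mx 0 i) - F t y))
  end.
Proof.
by case: o => [|i]; apply/funext => h /=; rewrite /tl /= scaler0 add0r.
Qed.

Lemma pop_W o F t y : apply_pop o F t y = derive (tl F) (t, y) (dir o).
Proof. by rewrite /derive pop_fun; case: o. Qed.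

Lemma popd_W o F t y : derivable (tl F) (t, y) (dir o) =
  match o with
  | PDt => derivable (fun s => F s y) t 1
  | PDy i => derivable (fun z => F t z) y (delta_mx 0 i)
  end.
Proof. by rewrite /derivable pop_fun; case: o. Qed.

Lemma tl_pop o F : tl (apply_pop o F) = fun q => derive (tl F) q (dir o).
Proof. by apply/funext => -[t y]; rewrite /tl /= pop_W. Qed.


Lemma near_IV (I : set R) (V : set 'rV[R]_n) t y : open I -> open V -> I t -> V y ->
  \forall q \near (t, y), I q.1 /\ V q.2.
Proof.
move=> oI oV It Vy.
exists (I, V); first by split; [exact: oI | exact: oV].
by move=> [a b] [/= ? ?].
Qed.

Lemma smooth_der (I : set R) (V : set 'rV[R]_n) f ops o q :
  smooth_on I V f -> I q.1 -> V q.2 -> derivable (tl (iter_pd ops f)) q (dir o).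
Proof.
case: q => t y Hs It Vy; rewrite popd_W.
have [_ H1 H2] := Hs ops t y It Vy.
by case: o.
Qed.

Lemma smooth_cont (I : set R) (V : set 'rV[R]_n) f ops q :
  smooth_on I V f -> I q.1 -> V q.2 -> {for q, continuous (tl (iter_pd ops f))}.
Proof.
case: q => t y Hs It Vy.
by have [H0 _ _] := Hs ops t y It Vy.
Qed.

Lemma swap_pop (I : set R) (V : set 'rV[R]_n) f ops o1 o2 t y :
  open I -> open V -> smooth_on I V f -> I t -> V y ->
  apply_pop o1 (apply_pop o2 (iter_pd ops f)) t y =
  apply_pop o2 (apply_pop o1 (iter_pd ops f)) t y.
Proof.
move=> oI oV Hs It Vy.
rewrite !pop_W !tl_pop.
apply: schwarzW.
- near=> q. have [Iq Vq] : I q.1 /\ V q.2 by near: q; exact: near_IV. split.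
  + exact: (smooth_der _ _ _ ops o2 _ Hs Iq Vq).
  + exact: (smooth_der _ _ _ ops o1 _ Hs Iq Vq).
  + rewrite -tl_pop. exact: (smooth_der _ _ _ (o2 :: ops) o1 _ Hs Iq Vq).
  + rewrite -tl_pop. exact: (smooth_der _ _ _ (o1 :: ops) o2 _ Hs Iq Vq).
- rewrite -!tl_pop. exact: (smooth_cont _ _ _ (o1 :: o2 :: ops) (t, y) Hs It Vy).
- rewrite -!tl_pop. exact: (smooth_cont _ _ _ (o2 :: o1 :: ops) (t, y) Hs It Vy).
Unshelve. all: by end_near.
Qed.

Lemma loc_pop (I : set R) (V : set 'rV[R]_n) (F G : fun2 R n) o t y :
  open I -> open V -> (forall t y, I t -> V y -> F t y = G t y) -> I t -> V y ->
  apply_pop o F t y = apply_pop o G t y.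
Proof.
move=> oI oV E It Vy; rewrite !pop_W; apply: near_eq_derive.
near=> q. have [Iq Vq] : I q.1 /\ V q.2 by near: q; exact: near_IV.
by rewrite /tl E.
Unshelve. all: by end_near.
Qed.
End W.

Section S.
Variable R : realType.

Lemma const1 (g : R -> R) a b : a <= b ->
  (forall x, a <= x <= b -> derivable g x 1 /\ derive g x 1 = 0) -> g a = g b.
Proof.
move=> ab H.
have := @MVT_segment R g (fun x => derive g x 1) a b ab.
case.
- move=> x; rewrite in_itv /= => /andP[ax xb]; apply: derivableP.
  by apply: (H x _).1; rewrite !ltW.
- apply: derivable_within_continuous => x; rewrite in_itv /= => xI.
  exact: (H x xI).1.
move=> x; rewrite in_itv /= => xI.
rewrite (H x xI).2 mul0r => /eqP; rewrite subr_eq0 => /eqP ->. by [].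
Qed.

Lemma loc_const n (f : 'rV[R]_n -> R) (z w : 'rV[R]_n) e :
  (forall y, ball z e y -> forall k, derivable f y (delta_mx 0 k) /\ derive f y (delta_mx 0 k) = 0) ->
  ball z e w -> f w = f z.
Proof.
move=> H zw.
have [e0 zwc] := zw.
pose zm m : 'rV[R]_n := \row_l (if (l < m)%N then w 0 l else z 0 l).
have step m (k : 'I_n) : nat_of_ord k = m -> f (zm m.+1) = f (zm m).
  move=> km.
  set δ := w 0 k - z 0 k.
  have E : zm m.+1 = zm m + δ *: delta_mx 0 k.
    apply/rowP => l; rewrite !mxE /= -km.
    case: (ltngtP l k) => lk.
    - have -> : (l == k) = false by apply/eqP => lk'; move: lk; rewrite lk' ltnn.
      by rewrite ltnS ltnW // mulr0 addr0.
    - have -> : (l == k) = false by apply/eqP => lk'; move: lk; rewrite lk' ltnn.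
      by rewrite ltnS leqNgt lk /= mulr0 addr0.
    - have -> : l = k by apply/val_inj.
      by rewrite leqnn eqxx mulr1 /δ addrC subrK.
  pose g r := f (zm m + r *: delta_mx 0 k).
  have Hb x : `|x| <= `|δ| -> ball z e (zm m + x *: delta_mx 0 k).
    move=> xd; split => // i j; rewrite (ord1 i) !mxE /ball /= -km.
    case: (eqVneq j k) => [->|jk].
    - rewrite ltnn mulr1 opprD addrA subrr sub0r normrN.
      apply: le_lt_trans xd _; rewrite /δ distrC.
      by have := zwc 0 k; rewrite /ball.
    - rewrite mulr0 addr0; case: ifP => _; last by rewrite subrr normr0.
      by have := zwc 0 j; rewrite /ball.
  have Hg x : `|x| <= `|δ| -> derivable g x 1 /\ derive g x 1 = 0.
    move=> xd; rewrite /g derivable_line derive_line; exact: H (Hb x xd) k.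
  rewrite E -/(g δ).
  have -> : f (zm m) = g 0 by rewrite /g scale0r addr0.
  case: (lerP 0 δ) => hd.
  - symmetry; apply: const1 => // x /andP[x0 xd]; apply: Hg.
    by rewrite !ger0_norm.
  - apply: const1; first exact: ltW.
    move=> x /andP[xd x0]; apply: Hg.
    by rewrite !ler0_norm ?lerN2 // ltW.
have ind m : (m <= n)%N -> f (zm m) = f z.
  elim: m => [_|m IH mn].
  - congr f; apply/rowP => l; rewrite !mxE /=.
    by [].
  - rewrite (step m (Ordinal mn)) //; apply: IH; exact: ltnW.
rewrite -(ind n (leqnn n)); congr f; apply/rowP => l; rewrite !mxE ltn_ord.
by [].
Qed.

Lemma conn_const n (V : set 'rV[R]_n) (f : 'rV[R]_n -> R) :
  open V -> connected V ->
  (forall y, V y -> forall k, derivable f y (delta_mx 0 k) /\ derive f y (delta_mx 0 k) = 0) ->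
  forall y0 y, V y0 -> V y -> f y = f y0.
Proof.
move=> oV cV H y0 y Vy0 Vy.
have Hloc z : V z -> nbhs z [set w | V w /\ f w = f z].
  move=> Vz; have /nbhs_ballP [e e0 He] := oV z Vz.
  apply/nbhs_ballP; exists e => // w zw; split; first exact: He.
  apply: (@loc_const n f z w e) => // y' zy' k; apply: H; exact: He.
pose B := [set w | V w /\ f w = f y0].
have BV : B = V.
  apply: cV.
  - by exists y0.
  - exists (interior B); first exact: open_interior.
    apply/seteqP; split => z.
    + move=> [Vz fz]; split => //.
      apply: filterS (Hloc z Vz) => w [Vw fw]; split => //; by rewrite fw.
    + by move=> [Vz /interior_subset].
  - exists (~` interior [set w | V w /\ f w <> f y0]).
      by rewrite closedC; exact: open_interior.
    apply/seteqP; split => z.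
    + move=> [Vz fz]; split => // /interior_subset [_ []]; exact.
    + move=> [Vz nz]; split => //; apply: contrapT => fz; apply: nz.
      apply: filterS (Hloc z Vz) => w [Vw fw]; split => //; by rewrite fw.
have : B y by rewrite BV.
by case.
Qed.

Lemma alg_zero (F : fieldType) (n : nat) (A : 'M[F]_n) (v : 'I_n -> F) :
  (1 < n)%N -> \rank A = n -> (forall i j k, v k * A i j = v i * A k j) -> forall k, v k = 0.
Proof.
move=> n1 rA H k; apply/eqP/negPn/negP => vk0.
have [i ik] : exists i : 'I_n, i != k.
  case: n A v H k vk0 {rA} n1 => [|[|m]] // A v H k vk0 _.
  case: (eqVneq k ord0) => [->|kn0]; last by exists ord0; rewrite eq_sym.
  by exists (lift ord0 ord0).
pose u : 'rV[F]_n := v k *: delta_mx 0 i - v i *: delta_mx 0 k.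
have uA : u *m A = 0.
  rewrite /u mulmxBl -!scalemxAl -!rowE.
  by apply/rowP => j; rewrite !mxE H subrr.
have rf : row_free A by rewrite /row_free rA.
have := mulmx_free_eq0 u rf; rewrite uA eqxx => /esym/eqP/rowP/(_ i).
rewrite !mxE eqxx (negbTE ik) /= eqxx mulr1 mulr0 subr0 => /eqP.
by rewrite (negbTE vk0).
Qed.
End S.

Section S.
Variables (R : realType) (n : nat).
Lemma pdy_mul (c H : fun2 R n) k t y :
  derivable (fun z => c t z) y (delta_mx 0 k) -> derivable (fun z => H t z) y (delta_mx 0 k) ->
  pdy k (fun t y => c t y * H t y) t y = pdy k c t y * H t y + c t y * pdy k H t y.
Proof.
move=> dc dH; rewrite /pdy.
have -> : (fun z => c t z * H t z) = (fun z => c t z) * (fun z => H t z) by apply/funext.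
rewrite deriveM // addrC; congr (_ + _); rewrite /GRing.scale /= mulrC //.
Qed.

Lemma alg4 (L1 L2 a b p q : R) : L1 = a + p -> L2 = b + q -> L1 = L2 -> p = q -> a = b.
Proof. by move=> -> -> /[swap] ->; apply: addIr. Qed.

Lemma alg5 (a b x x' y y' : R) : x = x' -> y = y' -> a * x' = b * y' -> a * x = b * y.
Proof. by move=> -> ->. Qed.
End S.


Opaque pdt pdy.
Theorem corollary4p2 (R : realType) (d : nat) (I : set R) (V : set 'rV[R]_(d.-1))
  (psi c : R -> 'rV[R]_(d.-1) -> R) :
  (2 < d)%N ->
  open I -> is_interval I ->
  open V -> connected V ->
  smooth_on I V psi ->
  (forall t y, I t -> V y -> \rank (hess_y (pdt psi) t y) = d.-1) ->
  smooth_on I V c ->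
  (forall t y, I t -> V y ->
     dtk_hess_y 2 psi t y = c t y *: dtk_hess_y 1 psi t y) ->
  exists c0 : R -> R, forall t y, I t -> V y -> c t y = c0 t.
Proof.
move=> d2 oI iI oV cV Hpsi Hrank Hc Heq.
have n1 : (1 < d.-1)%N by case: d d2 {I V psi c oI iI oV cV Hpsi Hrank Hc Heq} => [|[|[|d']]].
pose G j : fun2 R d.-1 := pdt (pdy j psi).
pose K j : fun2 R d.-1 := pdt (G j).
have HA i j t y : I t -> V y -> pdt (pdy i (pdy j psi)) t y = pdy i (G j) t y.
  move=> It Vy; exact: (@swap_pop R _ I V psi [:: PDy j] (PDt _) (PDy i) t y oI oV Hpsi It Vy).
have HB i j t y : I t -> V y -> pdt (pdt (pdy i (pdy j psi))) t y = pdy i (K j) t y.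
  move=> It Vy.
  have -> : pdt (pdt (pdy i (pdy j psi))) t y = pdt (pdy i (G j)) t y.
    exact: (@loc_pop R _ I V (pdt (pdy i (pdy j psi))) (pdy i (G j)) (PDt _) t y oI oV (HA i j) It Vy).
  exact: (@swap_pop R _ I V psi [:: PDt _; PDy j] (PDt _) (PDy i) t y oI oV Hpsi It Vy).
have HE i j t y : I t -> V y -> pdy i (K j) t y = c t y * pdy i (G j) t y.
  move=> It Vy; have := congr1 (fun M : 'M[R]_(d.-1) => M i j) (Heq t y It Vy).
  rewrite !mxE !iterS !iter0 => E.
  apply: (etrans (esym (HB i j t y It Vy))); apply: (etrans E).
  apply: (congr1 (fun z => c t y * z)); exact: (HA i j t y It Vy).
have HD i j k t y : I t -> V y -> pdy k (pdy i (K j)) t y =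
    pdy k c t y * pdy i (G j) t y + c t y * pdy k (pdy i (G j)) t y.
  move=> It Vy.
  apply: (etrans (@loc_pop R _ I V (pdy i (K j)) (fun t y => c t y * pdy i (G j) t y)
     (PDy k) t y oI oV (HE i j) It Vy)).
  apply: pdy_mul.
  - have [_ _ H3] := Hc [::] t y It Vy; exact: H3.
  - have [_ _ H3] := Hpsi [:: PDy i; PDt _; PDy j] t y It Vy; exact: H3.
have HS i j k t y : I t -> V y -> pdy k c t y * pdy i (G j) t y = pdy i c t y * pdy k (G j) t y.
  move=> It Vy.
  apply: (@alg4 R _ _ _ _ _ _ (HD i j k t y It Vy) (HD k j i t y It Vy)).
  - exact: (@swap_pop R _ I V psi [:: PDt _; PDt _; PDy j] (PDy k) (PDy i) t y oI oV Hpsi It Vy).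
  - apply: (congr1 (fun z => c t y * z)).
    exact: (@swap_pop R _ I V psi [:: PDt _; PDy j] (PDy k) (PDy i) t y oI oV Hpsi It Vy).
have HM i j t y : I t -> V y -> hess_y (pdt psi) t y i j = pdy i (G j) t y.
  move=> It Vy; rewrite mxE.
  apply: (@loc_pop R _ I V (pdy j (pdt psi)) (G j) (PDy i) t y oI oV _ It Vy).
  move=> t' y' It' Vy'.
  exact: (@swap_pop R _ I V psi [::] (PDy j) (PDt _) t' y' oI oV Hpsi It' Vy').
have Hz k t y : I t -> V y -> pdy k c t y = 0.
  move=> It Vy.
  apply: (@alg_zero R _ (hess_y (pdt psi) t y) (fun k => pdy k c t y) n1 (Hrank t y It Vy)).
  move=> i j k'.
  exact: (@alg5 R _ _ _ _ _ _ (HM i j t y It Vy) (HM k' j t y It Vy) (HS i j k' t y It Vy)).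
case: (pselect (exists y0, V y0)) => [[y0 Vy0]|nV].
- exists (fun t => c t y0) => t y It Vy.
  apply: (@conn_const R _ V (c t) oV cV _ y0 y Vy0 Vy).
  move=> y' Vy' k; split.
  + have [_ _ H3] := Hc [::] t y' It Vy'; exact: H3.
  + exact: (Hz k t y' It Vy').
- exists (fun _ => 0) => t y _ Vy; exfalso; apply: nV; by exists y.
Qed.
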